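(* Let $p,s\in\mathbb{N}$ be such that $p+1\leq s\leq 2^p$ and $s$ is a multiple of $4$. Then there is a UPB in $(\mathbb{C}^2)^{\otimes p}$ of cardinality $s$, with the possible exception of the case when $p\equiv 1\pmod 4$ and $s=2p+2$.
   Context: A product state in $(\mathbb{C}^2)^{\otimes p}$ is a vector $|v_1\rangle\otimes\cdots\otimes|v_p\rangle$ with each $|v_j\rangle\in\mathbb{C}^2$. A $p$-qubit unextendible product basis (UPB) is a finite set $\mathcal{S}\subseteq(\mathbb{C}^2)^{\otimes p}$ of unit product vectors that are pairwise orthogonal, such that no nonzero product vector outside $\mathcal{S}$ is orthogonal to every element of $\mathcal{S}$. *)

(* Defs.v *)
From HB Require Import structures.
From mathcomp Require Import all_boot all_order all_algebra.
Set Implicit Arguments. Unset Strict Implicit. Unset Printing Implicit Defensive.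
Import Order.TTheory GRing.Theory Num.Theory.
Local Open Scope ring_scope.

(* Computational basis of (C^2)^{⊗p}: bit strings of length p. *)
Definition bits (p : nat) := {ffun 'I_p -> 'I_2}.

(* A vector of (C^2)^{⊗p}, given by its coordinates in the computational basis. *)
Definition tvec (C : numClosedFieldType) (p : nat) := {ffun bits p -> C}.

(* The product vector |v_1> ⊗ ... ⊗ |v_p>, with each v_j ∈ C^2 a column vector. *)
Definition prodvec (C : numClosedFieldType) (p : nat) (v : 'I_p -> 'cV[C]_2)
  : tvec C p := [ffun x : bits p => \prod_(j < p) v j (x j) 0].

Definition is_product (C : numClosedFieldType) (p : nat) (u : tvec C p) : Prop :=
  exists v : 'I_p -> 'cV[C]_2, u = prodvec v.

Definition inner (C : numClosedFieldType) (p : nat) (u w : tvec C p) : C :=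
  \sum_(x : bits p) (u x)^* * w x.

(* Unextendible product basis: a finite set (duplicate-free list) of unit
   product vectors, pairwise orthogonal, such that every nonzero product
   vector orthogonal to all of them already belongs to the set. *)
Definition is_UPB (C : numClosedFieldType) (p : nat) (S : seq (tvec C p)) : Prop :=
  uniq S /\
  (forall u, u \in S -> is_product u /\ inner u u = 1) /\
  (forall u w, u \in S -> w \in S -> u != w -> inner u w = 0) /\
  (forall w : tvec C p, is_product w -> w != 0 ->
      (forall u, u \in S -> inner u w = 0) -> w \in S).

(* Main.v *)
Require Import Defs.
From HB Require Import structures.
From mathcomp Require Import all_boot all_order all_algebra.
From mathcomp Require Import zify ring.
Import Order.TTheory GRing.Theory Num.Theory.
Set Implicit Arguments. Unset Strict Implicit. Unset Printing Implicit Defensive.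


Section Real.
Variable C : numClosedFieldType.
Local Open Scope ring_scope.

Definition alpha (l : nat * bool) : C := if l.2 then - (l.1)%:R else 1.
Definition beta (l : nat * bool) : C := if l.2 then 1 else (l.1)%:R.
Definition rawv (l : nat * bool) : 'cV[C]_2 :=
  \col_(i < 2) (if i == ord0 then alpha l else beta l).
Definition nrm (l : nat * bool) : C := (1 + l.1 ^ 2)%N%:R.
Definition mu (l : nat * bool) : C := sqrtC (nrm l)^-1.
Definition locv l := mu l *: rawv l.
Definition linner (v w : 'cV[C]_2) : C := \sum_(b < 2) (v b 0)^* * w b 0.

Lemma alpha_conj l : (alpha l)^* = alpha l.
Proof. by rewrite /alpha; case: l.2; rewrite ?rmorphN ?rmorph_nat ?conjC1. Qed.
Lemma beta_conj l : (beta l)^* = beta l.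
Proof. by rewrite /beta; case: l.2; rewrite ?conjC_nat ?conjC1. Qed.

Lemma nrm_ge0 l : 0 <= nrm l. Proof. by rewrite /nrm ler0n. Qed.
Lemma nrm_neq0 l : nrm l != 0. Proof. by rewrite /nrm pnatr_eq0 addnC addn1. Qed.

Lemma mu_conj l : (mu l)^* = mu l.
Proof. by apply: geC0_conj; rewrite sqrtC_ge0 invr_ge0 nrm_ge0. Qed.
Lemma mu_neq0 l : mu l != 0.
Proof. by rewrite /mu sqrtC_eq0 invr_eq0 nrm_neq0. Qed.

Lemma linnerE v w : linner v w = (v ord0 0)^* * w ord0 0 + (v ord_max 0)^* * w ord_max 0.
Proof.
rewrite /linner big_ord_recl big_ord1.
by have -> : lift ord0 (ord0 : 'I_1) = ord_max :> 'I_2 by apply: val_inj.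
Qed.

Lemma linnerZ a b v w : linner (a *: v) (b *: w) = a^* * b * linner v w.
Proof. rewrite !linnerE !mxE !rmorphM /=; ring. Qed.

Lemma linner_raw l w : linner (rawv l) w = alpha l * w ord0 0 + beta l * w ord_max 0.
Proof. by rewrite linnerE !mxE /= alpha_conj beta_conj. Qed.

Lemma locv_norm l : linner (locv l) (locv l) = 1.
Proof.
rewrite /locv linnerZ mu_conj -expr2 sqrtCK linner_raw !mxE /=.
have -> : alpha l * alpha l + beta l * beta l = nrm l.
  rewrite /alpha /beta /nrm natrD natrX; case: l.2 => /=; ring.
by rewrite mulVf ?nrm_neq0.
Qed.

Lemma locv_orth k b : linner (locv (k, b)) (locv (k, ~~ b)) = 0.
Proof.
rewrite /locv linnerZ linner_raw !mxE /= /alpha /beta /=.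
by case: b => /=; rewrite ?mulr1 ?mul1r ?mulrN ?mulNr ?addrN ?addNr ?mulr0.
Qed.

Lemma det2 (a b a' b' x y : C) : a * x + b * y = 0 -> a' * x + b' * y = 0 ->
  a * b' - a' * b != 0 -> x = 0 /\ y = 0.
Proof.
move=> h1 h2 hd.
have ex : (a * b' - a' * b) * x = b' * (a * x + b * y) - b * (a' * x + b' * y) by ring.
have ey : (a * b' - a' * b) * y = a * (a' * x + b' * y) - a' * (a * x + b * y) by ring.
rewrite h1 h2 !mulr0 subrr in ex ey.
by move/eqP: ex; move/eqP: ey; rewrite !mulf_eq0 (negbTE hd) /= => /eqP -> /eqP ->.
Qed.

Lemma det_neq0 l l' : l != l' -> alpha l * beta l' - alpha l' * beta l != 0.
Proof.
case: l l' => [k []] [l []] /= hne; rewrite /alpha /beta /=.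
- rewrite (_ : _ - _ = l%:R - k%:R); last by ring.
  rewrite subr_eq0 eqr_nat; apply: contra hne => /eqP ->; by rewrite eqxx.
- rewrite (_ : _ - _ = - (1 + k * l)%N%:R); last by rewrite natrD natrM; ring.
  rewrite oppr_eq0 pnatr_eq0; lia.
- rewrite (_ : _ - _ = (1 + k * l)%N%:R); last by rewrite natrD natrM; ring.
  rewrite pnatr_eq0; lia.
- rewrite (_ : _ - _ = l%:R - k%:R); last by ring.
  rewrite subr_eq0 eqr_nat; apply: contra hne => /eqP ->; by rewrite eqxx.
Qed.

Lemma locv_nonpar l l' w : w != 0 -> linner (locv l) w = 0 -> linner (locv l') w = 0 -> l = l'.
Proof.
move=> wn0 h1 h2; apply/eqP; apply/negPn/negP => hne.
move: h1 h2; rewrite /locv -[w]scale1r !linnerZ !mu_conj !mulr1.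
move=> /eqP; rewrite mulf_eq0 (negbTE (mu_neq0 _)) /= linner_raw => /eqP h1.
move=> /eqP; rewrite mulf_eq0 (negbTE (mu_neq0 _)) /= linner_raw => /eqP h2.
have [x0 y0] := det2 h1 h2 (det_neq0 hne).
move/eqP: wn0; apply; apply/matrixP => i j; rewrite mxE (ord1 j).
case: i => [[|[|i]] hi] //.
- by rewrite -x0; congr (w _ _); apply: val_inj.
- by rewrite -y0; congr (w _ _); apply: val_inj.
Qed.

End Real.


Definition Row p := {ffun 'I_p -> nat * bool}.
Definition compl (l l' : nat * bool) := (l.1 == l'.1) && (l.2 != l'.2).
Definition design p (D : seq (Row p)) :=
  [/\ uniq D,
      (forall u w, u \in D -> w \in D -> u != w -> exists j, compl (u j) (w j)) &
      (forall c : 'I_p -> nat * bool, exists2 u, u \in D & forall j, u j != c j)].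
Definition E p s := exists D : seq (Row p), design D /\ size D = s.

Section Real2.
Variable C : numClosedFieldType.
Local Open Scope ring_scope.

Lemma inner_prod p (v w : 'I_p -> 'cV[C]_2) :
  inner (prodvec v) (prodvec w) = \prod_j linner (v j) (w j).
Proof.
rewrite /inner /linner bigA_distr_bigA /=; apply: eq_bigr => x _.
by rewrite !ffunE rmorph_prod -big_split.
Qed.

Lemma prodvec_neq0 p (w : 'I_p -> 'cV[C]_2) j : prodvec w != 0 -> w j != 0.
Proof.
apply: contraNneq => wj0; apply/eqP/ffunP => x; rewrite !ffunE.
by rewrite (bigD1 j) //= wj0 mxE mul0r.
Qed.

Definition vec p (u : Row p) : tvec C p := prodvec (fun j => locv C (u j)).

Lemma vec_norm p (u : Row p) : inner (vec u) (vec u) = 1.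
Proof. by rewrite inner_prod big1 // => j _; rewrite locv_norm. Qed.

Lemma vec_orth p (u w : Row p) j : compl (u j) (w j) -> inner (vec u) (vec w) = 0.
Proof.
case/andP=> /eqP e1 e2; rewrite inner_prod (bigD1 j) //=.
case: (u j) (w j) e1 e2 => k b [k' b'] /= <-; case: b; case: b' => // _;
  by rewrite ?locv_orth mul0r // -[false]/(~~ true) locv_orth mul0r.
Qed.

Lemma realize p s : E p s -> exists S : seq (tvec C p), is_UPB S /\ size S = s.
Proof.
case=> D [[UD orth unext] <-].
exists (map (@vec p) D); split; last by rewrite size_map.
have vinj : {in D &, injective (@vec p)}.
  move=> u w uD wD e; apply/eqP; apply/negPn/negP => ne.
  have [j cj] := orth u w uD wD ne.
  by move: (vec_orth cj); rewrite -e vec_norm => /eqP; rewrite oner_eq0.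
split; first by rewrite map_inj_in_uniq.
split.
  move=> x /mapP [u uD ->]; split; last exact: vec_norm.
  by exists (fun j => locv C (u j)).
split.
  move=> x y /mapP [u uD ->] /mapP [w wD ->] ne.
  have une : u != w by apply: contraNneq ne => ->.
  have [j cj] := orth u w uD wD une; exact: vec_orth cj.
move=> w [wv ->] wn0 horth; exfalso.
pose P j (u : Row p) := linner (locv C (u j)) (wv j) == 0.
pose u0 : Row p := [ffun => (0%N, false)].
pose c j := if has (P j) D then (nth u0 D (find (P j) D)) j else (0%N, false).
have [u uD hu] := unext c.
have := horth (vec u) (map_f _ uD); rewrite inner_prod => /eqP /prodf_eq0 [j _ hj].
have hP : has (P j) D by apply/hasP; exists u.
have := nth_find u0 hP; rewrite /P => /eqP h2.
have := locv_nonpar (prodvec_neq0 j wn0) (eqP hj) h2.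
by move/eqP: (hu j); rewrite /c hP.
Qed.

End Real2.


Definition join p q (r : Row p) (t : Row q) : Row (p + q) :=
  [ffun j => match split j with inl a => r a | inr b => t b end].

Lemma join_l p q (r : Row p) (t : Row q) a : join r t (lshift q a) = r a.
Proof. by rewrite ffunE (unsplitK (inl a : 'I_p + 'I_q)). Qed.
Lemma join_r p q (r : Row p) (t : Row q) b : join r t (rshift p b) = t b.
Proof. by rewrite ffunE (unsplitK (inr b : 'I_p + 'I_q)). Qed.

Lemma join_inj p q (r r' : Row p) (t t' : Row q) : join r t = join r' t' -> r = r' /\ t = t'.
Proof.
move=> e; split; apply/ffunP => j.
  by rewrite -(join_l r t) e join_l.
by rewrite -(join_r r t) e join_r.
Qed.

Lemma combine p q (T : seq (Row q)) (f : Row q -> seq (Row p)) :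
  design T -> (forall t, t \in T -> design (f t)) ->
  design [seq join r t | t <- T, r <- f t].
Proof.
case=> UT oT eT hf; split.
- apply: allpairs_uniq_dep => //; first by move=> t /hf [].
  move=> [t1 r1] [t2 r2] _ _ /= /join_inj [e1 e2]; by subst.
- move=> u w /allpairsPdep [t [r [tT rf ->]]] /allpairsPdep [t' [r' [tT' rf' ->]]] ne.
  have [et | net] := eqVneq t t'.
    subst t'; have ner : r != r' by apply: contraNneq ne => ->.
    have [_ o _] := hf t tT; have [j cj] := o r r' rf rf' ner.
    by exists (lshift q j); rewrite !join_l.
  have [j cj] := oT t t' tT tT' net.
  by exists (rshift p j); rewrite !join_r.
- move=> c.
  have [t tT ht] := eT (fun j => c (rshift p j)).
  have [_ _ e] := hf t tT.
  have [r rf hr] := e (fun j => c (lshift q j)).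
  exists (join r t); first exact: (allpairs_f_dep (fun t r => join r t) tT rf).
  move=> j; rewrite -(splitK j); case: (split j) => a /=.
    by rewrite join_l.
  by rewrite join_r.
Qed.

Lemma size_combine p q (T : seq (Row q)) (f : Row q -> seq (Row p)) :
  size [seq join r t | t <- T, r <- f t] = sumn [seq size (f t) | t <- T].
Proof. exact: size_allpairs_dep. Qed.

Lemma E0 : E 0 1.
Proof.
exists [:: [ffun => (0%N, false)]]; split => //; split => //.
- by move=> u w; rewrite !inE => /eqP -> /eqP ->; rewrite eqxx.
- by move=> c; exists [ffun => (0%N, false)]; rewrite ?inE // => -[].
Qed.

Definition full1 : seq (Row 1) := [:: [ffun => (0%N, false)]; [ffun => (0%N, true)]].

Lemma full1_design : design full1.
Proof.
have ne : [ffun => (0%N, false)] != [ffun => (0%N, true)] :> Row 1.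
  by apply/eqP => /ffunP /(_ ord0); rewrite !ffunE.
split.
- by rewrite /= andbT inE.
- move=> u w; rewrite !inE => /orP [] /eqP -> /orP [] /eqP -> //; rewrite ?eqxx //.
  + by move=> _; exists ord0; rewrite !ffunE.
  + by move=> _; exists ord0; rewrite !ffunE.
- move=> c; case: (boolP (c ord0 == (0%N, false))) => h.
    exists [ffun => (0%N, true)]; first by rewrite !inE eqxx orbT.
    by move=> j; rewrite (ord1 j) ffunE (eqP h).
  exists [ffun => (0%N, false)]; first by rewrite !inE eqxx.
  by move=> j; rewrite (ord1 j) ffunE eq_sym.
Qed.

Lemma Esum p a b : E p a -> E p b -> E (p + 1) (a + b).
Proof.
move=> [D1 [d1 s1]] [D2 [d2 s2]].
pose f (t : Row 1) := if t == [ffun => (0%N, false)] then D1 else D2.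
exists [seq join r t | t <- full1, r <- f t]; split.
  apply: combine; first exact: full1_design.
  by move=> t; rewrite /f; case: ifP.
rewrite size_combine /= /f eqxx.
have -> : ([ffun => (0%N, true)] == [ffun => (0%N, false)] :> Row 1) = false.
  by apply/eqP => /ffunP /(_ ord0); rewrite !ffunE.
by rewrite s1 s2 addn0.
Qed.

Lemma Efull p : E p (2 ^ p).
Proof.
elim: p => [|p IH]; first exact: E0.
by rewrite expnS mul2n -addnn -addn1; apply: Esum.
Qed.


Section RoundRobin.
Variable m : nat.
Hypothesis m_odd : odd m.

Definition sig (c a : nat) : nat :=
  if a == m then (if odd c then (c + m)./2 else c./2)
  else if a <= c then (if c - a == a then m else c - a)
       else (if c + m - a == a then m else c + m - a).

Ltac nifs := repeat (case: ifP => ?).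

Definition rel c a b :=
  (a < m /\ b < m /\ a <> b /\ (a + b = c \/ a + b = c + m)) \/
  (a = m /\ b < m /\ (2 * b = c \/ 2 * b = c + m)) \/
  (b = m /\ a < m /\ (2 * a = c \/ 2 * a = c + m)).

Lemma sig_rel c a : c < m -> a <= m -> rel c a (sig c a).
Proof. move=> hc ha; rewrite /rel /sig; nifs; lia. Qed.

Lemma rel_sym c a b : rel c a b -> rel c b a.
Proof. rewrite /rel; lia. Qed.

Lemma rel_uniq c a x y : rel c a x -> rel c a y -> x = y.
Proof. rewrite /rel => h1 h2; lia. Qed.

Lemma sig_le c a : c < m -> a <= m -> sig c a <= m.
Proof. move=> hc ha; have := sig_rel hc ha; rewrite /rel; lia. Qed.

Lemma sig_neq c a : c < m -> a <= m -> sig c a != a.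
Proof. move=> hc ha; have := sig_rel hc ha; rewrite /rel => h; apply/eqP; lia. Qed.

Lemma sig_inv c a : c < m -> a <= m -> sig c (sig c a) = a.
Proof.
move=> hc ha; have h1 := sig_rel hc ha.
apply: rel_uniq (sig_rel hc (sig_le hc ha)) (rel_sym h1).
Qed.

Lemma sig_ex a b : a <= m -> b <= m -> a != b -> exists2 c, c < m & sig c a = b.
Proof.
move=> ha hb /eqP ne.
have [c hc hr] : exists2 c, c < m & rel c a b.
  have [am | anm] := eqVneq a m.
    exists (if 2 * b < m then 2 * b else 2 * b - m); nifs; rewrite /rel; lia.
  have [bm | bnm] := eqVneq b m.
    exists (if 2 * a < m then 2 * a else 2 * a - m); nifs; rewrite /rel; lia.
  exists (if a + b < m then a + b else a + b - m); nifs; rewrite /rel; lia.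
exists c => //; exact: rel_uniq (sig_rel hc ha) hr.
Qed.

Definition pid c a := minn a (sig c a).
Definition side c a := sig c a < a.

Lemma pid_side_inj c a b : c < m -> a <= m -> b <= m ->
  pid c a = pid c b -> side c a = side c b -> a = b.
Proof.
move=> hc ha hb; rewrite /pid /side.
have /eqP na := sig_neq hc ha; have /eqP nb := sig_neq hc hb.
have ia := sig_inv hc ha; have ib := sig_inv hc hb.
case: (ltnP (sig c a) a) => h1; case: (ltnP (sig c b) b) => h2 e1 e2 //.
  have e' : sig c a = sig c b by lia.
  by rewrite -ia e' ib.
Qed.

End RoundRobin.


Lemma sum_bool_card (X : finType) (P : pred X) : \sum_(x : X) (P x : nat) = #|P|.
Proof.
rewrite -sum1_card [RHS]big_mkcond /=; apply: eq_bigr => x _.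
by rewrite unfold_in; case: (P x).
Qed.

Lemma card_le2 (X : finType) (A : pred X) (g : X -> bool) :
  {in A &, forall x y, g x = g y -> x = y} -> #|A| <= 2.
Proof.
move=> h; rewrite -(cardID g A).
have l1 : #|[predI A & g]| <= 1.
  apply/card_le1_eqP => x y; rewrite !inE => /andP [xA gx] /andP [yA gy].
  by apply: h => //; rewrite (gx : g x) (gy : g y).
have l2 : #|[predD A & g]| <= 1.
  apply/card_le1_eqP => x y; rewrite !inE => /andP [gx xA] /andP [gy yA].
  by apply: h => //; rewrite (negbTE (gx : ~~ g x)) (negbTE (gy : ~~ g y)).
by rewrite -[2]/(1 + 1); apply: leq_add.
Qed.

Lemma card_le1 (X : finType) (A : pred X) :
  {in A &, forall x y, x = y} -> #|A| <= 1.
Proof. by move=> h; apply/card_le1_eqP => x y hx hy; apply: h. Qed.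

Lemma compl_irr l : compl l l = false.
Proof. by rewrite /compl !eqxx. Qed.

Lemma sum_w k q : \sum_(j < q) (if (0 < j) && (j <= k) then 2 else 1) = q + minn k q.-1.
Proof.
elim: q => [|q IH]; first by rewrite big_ord0 minn0.
rewrite big_ord_recr /= IH; case: ifP => h; lia.
Qed.

Section Direct.
Variables n k : nat.
Hypotheses (n2 : 2 <= n) (neven : ~~ odd n) (kle : k <= n.-1).
Local Notation m := n.-1.
Local Notation p := (2 * n - 1 - k).

Lemma modd : odd m.
Proof. move: neven n2; lia. Qed.

Definition cc (j : nat) := k + (j - k - 1)./2.

Definition lab (j a : nat) (e : bool) : nat * bool :=
  if j == 0 then (a, e)
  else if j <= k then (pid m j.-1 a, side m j.-1 a)
  else (2 * pid m (cc j) a + (e (+) (odd (j - k - 1) && side m (cc j) a)), side m (cc j) a).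

Lemma lab_orth a b e e' : a < n -> b < n -> (a, e) != (b, e') ->
  exists2 j, j < p & compl (lab j a e) (lab j b e').
Proof.
move=> ha hb ne.
have [ab | nab] := eqVneq a b.
  subst b; exists 0; first lia.
  by rewrite /lab /compl /= eqxx; apply: contraNneq ne => ->.
have ham : a <= m by lia.
have hbm : b <= m by lia.
have [c hc hs] := sig_ex modd ham hbm nab.
have sb : sig m c b = a by rewrite -hs (sig_inv modd hc ham).
have ps : pid m c a = pid m c b by rewrite /pid hs sb minnC.
have sd : side m c b = ~~ side m c a.
  rewrite /side hs sb; case: (ltngtP a b) nab => // ->; by rewrite eqxx.
have [ck | kc] := ltnP c k.
  exists c.+1; first lia.
  rewrite /lab /=; have -> : (c < k) = true by [].
  by rewrite /compl /= ps eqxx sd; case: (side m c a).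
pose f := (e != e').
exists (k.+1 + (2 * (c - k) + f)); first by rewrite /f; case: (e != e'); lia.
rewrite /lab.
have -> : (k.+1 + (2 * (c - k) + f) == 0) = false by lia.
have -> : (k.+1 + (2 * (c - k) + f) <= k) = false by lia.
have e1 : k.+1 + (2 * (c - k) + f) - k - 1 = 2 * (c - k) + f by lia.
have e2 : cc (k.+1 + (2 * (c - k) + f)) = c by rewrite /cc e1; rewrite /f; case: (e != e'); lia.
rewrite e2 e1 /compl /= ps sd.
have -> : odd (2 * (c - k) + f) = f by rewrite /f; case: (e != e'); lia.
clear ne e1 e2; rewrite /f; clear f; case: (side m c a); case: e; case: e' => /=; rewrite ?eqxx //.
Qed.

Lemma cc_lt j : k < j -> j < p -> cc j < m.
Proof. rewrite /cc; lia. Qed.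

Lemma lab_inj1 j a b e e' : j < p -> (j == 0) || (k < j) -> a < n -> b < n ->
  lab j a e = lab j b e' -> a = b /\ e = e'.
Proof.
move=> hj hj0 ha hb; rewrite /lab.
have [jz|j0] := eqVneq j 0.
  by subst j; case=> -> ->.
rewrite (negbTE j0) /= in hj0.
have -> : (j <= k) = false by lia.
have hc := cc_lt hj0 hj.
set c := cc j; set g := odd (j - k - 1).
case=> e1 e2.
have [pe te] : pid m c a = pid m c b /\ e (+) (g && side m c a) = e' (+) (g && side m c b).
  move: e1; case: (e (+) _); case: (e' (+) _) => /=; lia.
have ab : a = b by apply: (pid_side_inj modd hc) => //; lia.
subst b; split => //.
by clear e1; move: te; case: (g && side m c a); case: e; case: e'.
Qed.

Lemma lab_inj2 j a b e e' : 0 < j -> j <= k -> a < n -> b < n ->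
  lab j a e = lab j b e' -> a = b.
Proof.
move=> hj0 hjk ha hb; rewrite /lab.
have -> : (j == 0) = false by lia.
rewrite hjk; case=> e1 e2.
have hc : j.-1 < m by lia.
by apply: (pid_side_inj modd hc) => //; lia.
Qed.

Definition row (x : ('I_n * bool)%type) : Row p := [ffun j : 'I_p => lab j x.1 x.2].

Lemma row_neq x y : x != y -> exists j, compl (row x j) (row y j).
Proof.
move=> ne.
have ne' : (val x.1, x.2) != (val y.1, y.2).
  apply: contraNneq ne; case: x y => [a e] [b e'] /= [/val_inj -> ->]; done.
have [j hj c] := lab_orth (ltn_ord x.1) (ltn_ord y.1) ne'.
by exists (Ordinal hj); rewrite !ffunE.
Qed.

Lemma row_inj : injective row.
Proof.
move=> x y e; apply/eqP; apply/negPn/negP => /row_neq [j].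
by rewrite e compl_irr.
Qed.

Definition Dd := map row (enum {: 'I_n * bool}).

Lemma Dd_design : design Dd.
Proof.
split.
- by rewrite map_inj_uniq ?enum_uniq //; exact: row_inj.
- move=> u w /mapP [x _ ->] /mapP [y _ ->] ne.
  apply: row_neq; by apply: contraNneq ne => ->.
move=> c.
case: (boolP [exists x, [forall j, row x j != c j]]) => [/existsP [x /forallP h] | hn].
  by exists (row x) => //; apply: map_f; rewrite mem_enum.
exfalso.
have hall : forall x, exists j, row x j == c j.
  move=> x; move: hn; rewrite negb_exists => /forallP /(_ x).
  by rewrite negb_forall => /existsP [j]; rewrite negbK; exists j.
have h1 : #|{: 'I_n * bool}| <= \sum_(x : 'I_n * bool) \sum_(j < p) (row x j == c j : nat).
  rewrite -sum1_card; apply: leq_sum => x _.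
  have [j hj] := hall x; rewrite (bigD1 j) //= hj; lia.
rewrite exchange_big /= in h1.
have h2 : forall j : 'I_p, \sum_(x : 'I_n * bool) (row x j == c j : nat) <=
                   (if (0 < j) && (j <= k) then 2 else 1).
  move=> j; rewrite (sum_bool_card (fun x => row x j == c j)).
  case: ifP => hj.
    apply: (card_le2 (g := snd)) => x y; rewrite !unfold_in => /eqP hx /eqP hy hg.
    move: hx; rewrite -hy !ffunE => e.
    case/andP: hj => hj0 hjk.
    have ab := lab_inj2 hj0 hjk (ltn_ord x.1) (ltn_ord y.1) e.
    by clear hy e; case: x y hg ab => [a e] [b e'] /= -> /val_inj ->.
  apply: card_le1 => x y; rewrite !unfold_in => /eqP hx /eqP hy.
  move: hx; rewrite -hy !ffunE => e.
  have hj' : (j == 0 :> nat) || (k < j) by move: hj; lia.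
  have [ab ee] := lab_inj1 (ltn_ord j) hj' (ltn_ord x.1) (ltn_ord y.1) e.
  by clear hy e; case: x y ab ee => [a e] [b e'] /= /val_inj -> ->.
have h3 : \sum_(j < p) \sum_(x : 'I_n * bool) (row x j == c j : nat) <=
    \sum_(j < p) (if (0 < j) && (j <= k) then 2 else 1) by apply: leq_sum => j _; exact: h2.
have {h1 h3} h3 := leq_trans h1 h3.
rewrite sum_w card_prod card_ord card_bool in h3.
lia.
Qed.

Lemma Edirect : E p (2 * n).
Proof.
exists Dd; split; first exact: Dd_design.
by rewrite size_map -cardE card_prod card_ord card_bool mulnC.
Qed.

End Direct.


Lemma Edir p s : (4 %| s)%N -> (p.+1 <= s)%N -> (s <= 2 * p)%N -> E p s.
Proof.
move=> h4 h1 h2.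
have := @Edirect (s %/ 2) (s - 1 - p).
have -> : (2 * (s %/ 2) - 1 - (s - 1 - p) = p)%N by lia.
have -> : (2 * (s %/ 2) = s)%N by lia.
apply; lia.
Qed.

Lemma E6_20 : E 6 20.
Proof.
have [T [dT sT]] := Edir (p := 3) (s := 4) isT isT isT.
have [F [dF sF]] := Efull 3.
case: T dT sT => [|t1 [|t2 [|t3 [|t4 [|]]]]] // dT _.
pose f (t : Row 3) := if t == t1 then F else [:: t1; t2; t3; t4].
exists [seq join r t | t <- [:: t1; t2; t3; t4], r <- f t]; split.
  apply: combine => // t _; rewrite /f; case: ifP => //.
rewrite size_allpairs_dep /= /f eqxx.
case: dT => u _ _.
move: u; rewrite /= !inE !negb_or => /andP [/and3P [n12 n13 n14] _].
by rewrite ![_ == t1]eq_sym (negbTE n12) (negbTE n13) (negbTE n14) sF.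
Qed.

Lemma pow_bounds p : (2 <= p -> 4 %| 2 ^ p)%N /\ (5 <= p -> 4 * p + 4 <= 2 ^ p)%N.
Proof.
split => h.
  by rewrite -(subnK h) expnD dvdn_mull.
rewrite -(subnK h) expnD.
have := ltn_expl (p - 5) (isT : 1 < 2)%N.
rewrite (_ : 2 ^ 5 = 32)%N //; lia.
Qed.

Lemma Emain p s : (4 %| s)%N -> (p.+1 <= s <= 2 ^ p)%N ->
  ~ (p %% 4 = 1 /\ s = 2 * p + 2)%N -> E p s.
Proof.
elim: p s => [|p IH] s h4 /andP [h1 h2] hex.
  by rewrite expn0 in h2; lia.
have [hs | hs] := leqP s (2 * p.+1).
  exact: Edir.
have [hf | hf] := eqVneq s (2 ^ p.+1).
  by rewrite hf; exact: Efull.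
have [h620 | h620] := boolP ((p.+1 == 6) && (s == 20)).
  by case/andP: h620 => /eqP -> /eqP ->; exact: E6_20.
have [pb1 pb2] := pow_bounds p.
rewrite expnS in h2 hf.
have hp2 : (2 <= p)%N.
  rewrite leqNgt; apply/negP => hp.
  have [] : p = 0%N \/ p = 1%N by lia.
    by move=> hp'; subst p; rewrite expn0 in h2 hf; lia.
  by move=> hp'; subst p; rewrite expn1 in h2 hf; lia.
have Z4 := pb1 hp2.
have [a [b [hab [[ha1 ha2 ha3 ha4] [hb1 hb2 hb3 hb4]]]]] : exists a b, (a + b = s)%N /\
   [/\ 4 %| a, p.+1 <= a, a <= 2 ^ p & ~ (p %% 4 = 1 /\ a = 2 * p + 2)]%N /\
   [/\ 4 %| b, p.+1 <= b, b <= 2 ^ p & ~ (p %% 4 = 1 /\ b = 2 * p + 2)]%N.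
  case: (boolP ((p.+1 %% 4 == 2) && ((4 * (s %/ 8) == 2 * p.+1) || (s - 4 * (s %/ 8) == 2 * p.+1)))%N) => h.
    exists (4 * (s %/ 8) - 4)%N, (s - 4 * (s %/ 8) + 4)%N.
    move: (pb2) => pb2'; repeat split; lia.
  exists (4 * (s %/ 8))%N, (s - 4 * (s %/ 8))%N.
  move: (pb2) => pb2'; repeat split; lia.
rewrite -hab -addn1; apply: Esum; apply: IH => //; rewrite ?ha2 ?hb2 ?andbT //.
Qed.

Theorem theorem2 (C : numClosedFieldType) (p s : nat) :
  (p.+1 <= s <= 2 ^ p)%N -> (4 %| s)%N ->
  ~ (p %% 4 = 1 /\ s = (2 * p + 2))%N ->
  exists S : seq (tvec C p), is_UPB S /\ size S = s.
Proof.
move=> h1 h4 hex.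
exact: (realize C (Emain h4 h1 hex)).
Qed.
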